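(* Let $M(n,h)=\frac{2n+2-2\lceil 2\sqrt{n+h}\,\rceil}{4}$. If $A$ is a polyomino with $n$ tiles and $h$ holes such that $M(n,h)=h+\tfrac12$, then exactly one of the following occurs: (1) the dual graph of $A$ has a single cycle; (2) $A$ has a single hole of area two and all its other holes have area one; (3) $p_o(A)=2\lceil 2\sqrt{n+h}\,\rceil+2$.
   Context: A polyomino is a finite union of closed unit squares (tiles) of the square lattice, any two meeting (if at all) in a whole edge, whose interior is connected. Its holes are the bounded connected components of its complement in the plane; the area of a hole is the number of unit squares needed to fill it. The dual graph has a vertex per tile and an edge between tiles sharing an edge. $p_o(A)$ is the number of unit edges on the boundary of $A$ not bounding a hole. *)

(* Defs.v *)
From HB Require Import structures.
From mathcomp Require Import all_boot all_order all_algebra.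
From mathcomp Require Import reals.
Set Implicit Arguments. Unset Strict Implicit. Unset Printing Implicit Defensive.
Import Order.TTheory GRing.Theory Num.Theory.

(* Cells of the square lattice are represented inside a finite window
   'I_N x 'I_N; the cell (i,j) is the closed unit square [i,i+1]x[j,j+1].
   A polyomino is required to avoid the border row/columns of the window,
   so every cell outside the window (all empty) is connected to the
   (empty) border ring: the unbounded complementary component is exactly
   the set of empty cells connected to the border. *)
Section Poly.
Variable N : nat.
Definition cell := ('I_N * 'I_N)%type.

Definition adj : rel cell := fun x y =>
  ((x.1 == y.1) && ((x.2.+1 == y.2 :> nat) || (y.2.+1 == x.2 :> nat)))
  || ((x.2 == y.2) && ((x.1.+1 == y.1 :> nat) || (y.1.+1 == x.1 :> nat))).

Definition on_border (c : cell) : bool :=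
  (c.1 == 0 :> nat) || (c.1 == N.-1 :> nat) || (c.2 == 0 :> nat) || (c.2 == N.-1 :> nat).

Variable A : {set cell}.

Definition dadj : rel cell := fun x y => [&& adj x y, x \in A & y \in A].
Definition eadj : rel cell := fun x y => [&& adj x y, x \notin A & y \notin A].

Definition polyomino : Prop :=
  [/\ A != set0,
      (forall c, c \in A -> ~~ on_border c) &
      (forall x y, x \in A -> y \in A -> connect dadj x y)].

Definition outer (c : cell) : bool :=
  (c \notin A) && [exists b, on_border b && connect eadj c b].

Definition hole_cell (c : cell) : bool := (c \notin A) && ~~ outer c.

Definition holes : {set {set cell}} :=
  [set [set y | connect eadj x y] | x in [set c | hole_cell c]].

Definition ntiles : nat := #|A|.
Definition nholes : nat := #|holes|.

(* p_o(A): boundary unit edges not bounding a hole, i.e. edges between a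
   tile and an empty cell of the unbounded component *)
Definition p_out : nat :=
  #|[set p : cell * cell | [&& p.1 \in A, outer p.2 & adj p.1 p.2]]|.

Definition dual_edge (e : {set cell}) : bool :=
  (#|e| == 2) && (e \subset A) && [forall x in e, forall y in e, (x != y) ==> adj x y].

Definition is_cycle (C : {set {set cell}}) : Prop :=
  [/\ C != set0,
      (forall e, e \in C -> dual_edge e),
      (forall v : cell, #|[set e in C | v \in e]| = 0 \/ #|[set e in C | v \in e]| = 2) &
      (forall u v, u \in cover C -> v \in cover C ->
         connect (fun x y => [set x; y] \in C) u v)].

Definition single_cycle : Prop :=
  exists C, is_cycle C /\ forall C', is_cycle C' -> C' = C.

End Poly.

Local Open Scope ring_scope.
Definition ceil2sqrt (R : realType) (n h : nat) : int :=
  Num.ceil (2 * Num.sqrt ((n + h)%:R : R)).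

Definition Mnh (R : realType) (n h : nat) : R :=
  (2 * n%:R + 2 - 2 * (ceil2sqrt R n h)%:~R) / 4.

(* Main.v *)
Require Import Defs.
From HB Require Import structures.
From mathcomp Require Import all_boot all_order all_algebra.
From mathcomp Require Import reals.
From mathcomp Require Import zify ring lra.
Set Implicit Arguments. Unset Strict Implicit. Unset Printing Implicit Defensive.

Definition deg (T : finType) (S : {set {set T}}) (v : T) : nat := #|[set e in S | v \in e]|.
Definition erel (T : finType) (S : {set {set T}}) : rel T := fun x y => [set x; y] \in S.
Definition pairs (T : finType) (S : {set {set T}}) := forall e, e \in S -> #|e| = 2.

Lemma degE (T : finType) (S : {set {set T}}) v : deg S v = \sum_(e in S) (v \in e).
Proof.
rewrite /deg -sum1_card [RHS]big_mkcond [LHS]big_mkcond /=.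
by apply: eq_bigr => e _; rewrite inE; case: (e \in S); case: (v \in e).
Qed.

Lemma hs_gen (T : finType) (S : {set {set T}}) (X : {set T}) :
  \sum_(v in X) deg S v = \sum_(e in S) #|e :&: X|.
Proof.
under eq_bigr do rewrite degE.
rewrite exchange_big /=; apply: eq_bigr => e _.
rewrite -sum1_card [RHS]big_mkcond [LHS]big_mkcond /=.
by apply: eq_bigr => v _; rewrite inE; case: (v \in X); case: (v \in e).
Qed.

Lemma in_cover (T : finType) (S : {set {set T}}) v : (v \in cover S) = (0 < deg S v).
Proof.
apply/bigcupP/card_gt0P => [[e eS ve]|[e]]; first by exists e; rewrite inE eS.
by rewrite inE => /andP[eS ve]; exists e.
Qed.

Lemma deg0 (T : finType) (S : {set {set T}}) v : v \notin cover S -> deg S v = 0.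
Proof. by rewrite in_cover lt0n negbK => /eqP. Qed.

Lemma handshake (T : finType) (S : {set {set T}}) :
  pairs S -> \sum_(v in cover S) deg S v = 2 * #|S|.
Proof.
move=> pS.
have -> : \sum_(v in cover S) deg S v = \sum_(v in [set: T]) deg S v.
  rewrite [RHS](big_setID (cover S)) /= setTI.
  rewrite [X in _ = _ + X]big1 ?addn0 //.
  by move=> v; rewrite inE => /andP[/deg0 ->].
rewrite hs_gen (eq_bigr (fun _ => 2)); last by move=> e eS; rewrite setIT pS.
by rewrite sum_nat_const mulnC.
Qed.

Lemma erel_sym (T : finType) (S : {set {set T}}) : symmetric (erel S).
Proof. by move=> x y; rewrite /erel setUC. Qed.

Lemma erel_cover (T : finType) (S : {set {set T}}) x y : erel S x y -> x \in cover S.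
Proof. by move=> H; apply/bigcupP; exists [set x; y] => //; rewrite !inE eqxx. Qed.

Lemma first_step (T : finType) (r : rel T) x y :
  connect r x y -> x != y -> exists z, r x z.
Proof.
case/connectP => [[|z p]] /= => [_ ->|/andP[rz _] _ _]; first by rewrite eqxx.
by exists z.
Qed.

Lemma cover_sub (T : finType) (S S' : {set {set T}}) :
  S' \subset S -> cover S' \subset cover S.
Proof.
move=> sub; apply/subsetP => v /bigcupP[e eS ve]; apply/bigcupP; exists e => //.
exact: (subsetP sub).
Qed.

Lemma pairs_sub (T : finType) (S S' : {set {set T}}) :
  pairs S -> S' \subset S -> pairs S'.
Proof. by move=> pS sub e eS; apply: pS; apply: (subsetP sub). Qed.

Lemma pair_form (T : finType) (e : {set T}) :
  #|e| = 2 -> exists x y, x != y /\ e = [set x; y].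
Proof. by move=> H; apply/cards2P; rewrite H. Qed.

Definition leafy (T : finType) (S : {set {set T}}) : bool :=
  [forall S' : {set {set T}}, ((S' \subset S) && (S' != set0)) ==>
     [exists v in cover S', deg S' v == 1]].

Lemma leafy_sub (T : finType) (S S' : {set {set T}}) :
  leafy S -> S' \subset S -> leafy S'.
Proof.
move=> /forallP L sub; apply/forallP => S2; apply/implyP => /andP[s2 n2].
by have /implyP := L S2; apply; rewrite n2 (subset_trans s2 sub).
Qed.

Lemma acyc_count (T : finType) (S : {set {set T}}) :
  pairs S -> leafy S -> S != set0 -> #|S| < #|cover S|.
Proof.
have [n] := ubnP #|S|; elim: n S => // n IH S lt pS lS nS.
have /forallP/(_ S)/implyP := lS; rewrite subxx nS => /(_ isT).
case/exists_inP => v vc /cards1P[e0 De0].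
have e0S' : e0 \in [set e in S | v \in e] by rewrite De0 set11.
move: (e0S'); rewrite inE => /andP[e0S ve0].
set S' := S :\ e0.
have cS' : cover S' \subset cover S :\ v.
  apply/subsetP => w /bigcupP[f]; rewrite !inE => /andP[fe fS] wf.
  apply/andP; split; last by apply/bigcupP; exists f.
  apply/negP => /eqP wv; subst w.
  have : f \in [set e in S | v \in e] by rewrite inE fS wf.
  by rewrite De0 inE (negbTE fe).
have cardS : #|S| = #|S'|.+1 by rewrite (cardsD1 e0 S) e0S.
have cv : #|cover S| = #|cover S :\ v|.+1 by rewrite (cardsD1 v (cover S)) vc.
case: (S' =P set0) => [S0|/eqP nS'].
  have SE : S = [set e0].
    apply/setP => f; rewrite inE; apply/idP/eqP => [fS|->//].
    apply/eqP/negPn/negP => fne; have : f \in S' by rewrite !inE fne fS.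
    by rewrite S0 inE.
  rewrite SE cards1 /cover big_set1 pS //.
have := IH S'; rewrite -cardS => /(_ lt).
move/(_ (pairs_sub pS (subsetDl _ _)) (leafy_sub lS (subsetDl _ _)) nS') => H.
by rewrite cv ltnS (leq_trans H) // subset_leq_card.
Qed.

Lemma pair_conn (T : finType) (S : {set {set T}}) e a b :
  pairs S -> e \in S -> a \in e -> b \in e -> connect (erel S) a b.
Proof.
move=> pS eS ae be; have [x [y [xy De]]] := pair_form (pS e eS).
move: ae be; rewrite De !inE => /orP[]/eqP-> /orP[]/eqP->; rewrite ?connect0 //;
  apply: connect1; rewrite /erel -?De //; by rewrite setUC -De.
Qed.

Lemma comp_closed (T : finType) (S : {set {set T}}) u w e :
  pairs S -> e \in S -> w \in e -> connect (erel S) u w ->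
  e \subset [set z | connect (erel S) u z].
Proof.
move=> pS eS we uw; apply/subsetP => z ze; rewrite inE.
by apply: (connect_trans uw); apply: pair_conn ze.
Qed.

Definition acycle (T : finType) (S : {set {set T}}) : Prop :=
  [/\ S != set0, (forall v, deg S v = 0 \/ deg S v = 2) &
      (forall u v, u \in cover S -> v \in cover S -> connect (erel S) u v)].

Lemma sum_ge2 (T : finType) (X : {set T}) (f : T -> nat) w :
  (forall v, v \in X -> 1 < f v) -> w \in X -> 2 < f w ->
  (2 * #|X|).+1 <= \sum_(v in X) f v.
Proof.
move=> H wX fw; rewrite (bigD1 w) //=.
have : \sum_(i in X | i != w) 2 <= \sum_(i in X | i != w) f i.
  by apply: leq_sum => i /andP[iX _]; apply: H.
rewrite sum_nat_const.
have -> : #|[pred i in X | i != w]| = #|X|.-1.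
  by rewrite (cardsD1 w X) wX /=; apply: eq_card => i; rewrite !inE andbC.
have : 0 < #|X| by apply/card_gt0P; exists w.
lia.
Qed.

Lemma extract (T : finType) (S : {set {set T}}) :
  pairs S -> S != set0 -> (forall v, v \in cover S -> 1 < deg S v) ->
  exists C : {set {set T}}, C \subset S /\ acycle C.
Proof.
move=> pS nS nlS.
pose P (C : {set {set T}}) := [&& C \subset S, C != set0 & [forall v in cover C, 1 < deg C v]].
have PS : P S by rewrite /P subxx nS /=; apply/forall_inP.
case: (@arg_minnP _ S P (fun C : {set {set T}} => #|C|) PS) => C /and3P[CS nC /forall_inP nlC] Cmin.
have pC := pairs_sub pS CS.
exists C; split => //.
have lsub : forall e, e \in C -> leafy (C :\ e).
  move=> e eC; apply/forallP => S'; apply/implyP => /andP[s' n'].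
  have s'C : S' \subset C := subset_trans s' (subsetDl _ _).
  have lt : #|S'| < #|C|.
    apply: (leq_ltn_trans (subset_leq_card s')).
    by rewrite (cardsD1 e C) eC.
  case: (boolP [exists v in cover S', deg S' v == 1]) => // H.
  have : P S'.
    rewrite /P (subset_trans s'C CS) n' /=; apply/forall_inP => v vc.
    have := vc; rewrite in_cover => d0; rewrite ltn_neqAle d0 andbT eq_sym.
    apply/negP => /eqP d1; move/negP: H; apply; apply/exists_inP; exists v => //.
    by rewrite d1.
  by move/Cmin; rewrite leqNgt lt.
have [e eC] := set0Pn _ nC.
have cC : #|C| <= #|cover C|.
  rewrite (cardsD1 e C) eC add1n.
  case: (C :\ e =P set0) => [->|/eqP ne].
    rewrite cards0; have [x [y [_ De]]] := pair_form (pC e eC).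
    apply/card_gt0P; exists x; apply/bigcupP; exists e => //.
    by rewrite De set21.
  have := acyc_count (pairs_sub pC (subsetDl _ _)) (lsub e eC) ne.
  move=> H; apply: (leq_trans H); apply: subset_leq_card.
  exact: cover_sub (subsetDl _ _).
have d2 : forall v, v \in cover C -> deg C v = 2.
  move=> v vc; apply/eqP; rewrite eqn_leq nlC // andbT leqNgt; apply/negP => d3.
  have := sum_ge2 nlC vc d3; rewrite handshake //; lia.
split => //.
  by move=> v; case: (boolP (v \in cover C)) => [/d2|/deg0]; auto.
move=> u v uc vc.
pose X := [set z | connect (erel C) u z].
pose CX := [set f in C | f \subset X].
have cl : forall w f, w \in X -> f \in C -> w \in f -> f \subset X.
  by move=> w f; rewrite inE => uw fC wf; apply: comp_closed uw.
have degX : forall w, w \in X -> deg CX w = deg C w.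
  move=> w wX; rewrite /deg; apply: eq_card => f; rewrite !inE.
  by case fC: (f \in C); case wf: (w \in f); rewrite ?andbF //= (cl w).
have cXX : cover CX \subset X.
  apply/subsetP => w /bigcupP[f]; rewrite inE => /andP[_ fX] wf.
  exact: (subsetP fX).
have PCX : P CX.
  rewrite /P; apply/and3P; split.
  - by apply: subset_trans CS; apply/subsetP => f; rewrite inE => /andP[].
  - move: uc => /bigcupP[f fC uf]; apply/set0Pn; exists f; rewrite inE fC /=.
    by apply: (cl u) => //; rewrite inE connect0.
  - apply/forall_inP => w wc; have wX := subsetP cXX w wc.
    rewrite degX // d2 //; apply: (subsetP (cover_sub _)) wc.
    by apply/subsetP => f; rewrite inE => /andP[].
have CXC : CX \subset C by apply/subsetP => f; rewrite inE => /andP[].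
have eqC : CX = C.
  apply/eqP; rewrite eqEcard CXC /=; exact: Cmin.
have : v \in X by apply: (subsetP cXX); rewrite eqC.
by rewrite inE.
Qed.

Lemma deg_del (T : finType) (C : {set {set T}}) e w :
  e \in C -> deg (C :\ e) w + (w \in e) = deg C w.
Proof.
move=> eC; rewrite /deg.
case we: (w \in e) => /=.
  rewrite (cardsD1 e [set f in C | w \in f]) inE eC we addn1 add1n; congr _.+1.
  by apply: eq_card => f; rewrite !inE; case: (f == e); case: (f \in C).
rewrite addn0; apply: eq_card => f; rewrite !inE.
case fe: (f == e) => //=; move/eqP: fe => ->; by rewrite eC we.
Qed.

Lemma cyc_remove (T : finType) (C : {set {set T}}) e u v :
  pairs C -> acycle C -> e \in C -> e = [set u; v] -> u != v ->
  connect (erel (C :\ e)) u v.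
Proof.
move=> pC [nC dC cC] eC De uv.
case: (boolP (connect (erel (C :\ e)) u v)) => // nuv; exfalso.
pose X := [set w | connect (erel (C :\ e)) u w].
have vX : v \notin X by rewrite inE.
have uX : u \in X by rewrite inE connect0.
have pD : pairs (C :\ e) := pairs_sub pC (subsetDl _ _).
have ev : ~~ odd (\sum_(w in X) deg (C :\ e) w).
  rewrite hs_gen; apply: (big_ind (fun n => ~~ odd n)) => //.
    by move=> a b Ha Hb; rewrite oddD (negbTE Ha) (negbTE Hb).
  move=> f fD; case: (eqVneq (f :&: X) set0) => [->|/set0Pn[w]]; first by rewrite cards0.
  rewrite inE => /andP[wf wX].
  have : f \subset X by move: wX; rewrite inE => uw; apply: comp_closed uw.
  by move/setIidPl => ->; rewrite pD.
have d2 : forall w, w \in X -> deg (C :\ e) w + (w == u) = 2.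
  move=> w wX.
  have wc : w \in cover C.
    case: (eqVneq w u) => [->|wu]; first by apply/bigcupP; exists e => //; rewrite De set21.
    have wu' : connect (erel (C :\ e)) w u.
      by rewrite (sym_connect_sym (@erel_sym _ (C :\ e))); move: wX; rewrite inE.
    have [z /erel_cover] := first_step wu' wu.
    by apply: (subsetP (cover_sub (subsetDl _ _))).
  have : w \in e = (w == u).
    rewrite De !inE; case: (eqVneq w v) => [wv|]; last by rewrite orbF.
    by move: wX; rewrite wv (negbTE vX).
  move=> <-; rewrite deg_del //.
  by case: (dC w) => // d0; move: wc; rewrite in_cover d0.
have : \sum_(w in X) (deg (C :\ e) w + (w == u)) = 2 * #|X|.
  by rewrite (eq_bigr (fun _ => 2)) // sum_nat_const mulnC.
have s1 : \sum_(w in X) (w == u : nat) = 1.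
  by rewrite (bigD1 u) //= eqxx big1 // => w /andP[_ /negbTE ->].
rewrite big_split /= s1 => H; move: ev; have -> : \sum_(w in X) deg (C :\ e) w = (2 * #|X|).-1 by lia.
have : 0 < #|X| by apply/card_gt0P; exists u.
case: #|X| => // k _; have -> : (2 * k.+1).-1 = (2 * k).+1 by lia.
by rewrite /= oddM.
Qed.

Lemma remove_conn (T : finType) (G C : {set {set T}}) e (V : {set T}) :
  pairs G -> C \subset G -> acycle C -> e \in C ->
  (forall x y, x \in V -> y \in V -> connect (erel G) x y) ->
  forall x y, x \in V -> y \in V -> connect (erel (G :\ e)) x y.
Proof.
move=> pG CG aC eC H x y xV yV.
move: (H x y xV yV); apply: connect_sub => a b ab.
case: (eqVneq [set a; b] e) => [Dab|ne]; last first.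
  by apply: connect1; rewrite /erel !inE ne; exact: ab.
have pC := pairs_sub pG CG.
have ab' : a != b.
  apply/negP => /eqP E; move: (pC e eC); rewrite -Dab E setUid cards1 => //.
have := cyc_remove pC aC eC (esym Dab) ab'.
apply: connect_sub => p q; rewrite /erel !inE => /andP[ne' pC'].
by apply: connect1; rewrite /erel !inE ne' (subsetP CG _ pC').
Qed.

Fixpoint reach (T : finType) (S : {set {set T}}) (x0 : T) (k : nat) : {set T} :=
  if k is k'.+1 then reach S x0 k' :|: [set y | [exists z in reach S x0 k', erel S z y]]
  else [set x0].

Lemma reach_mono (T : finType) (S : {set {set T}}) x0 k m :
  reach S x0 k \subset reach S x0 (k + m).
Proof.
elim: m => [|m IH]; first by rewrite addn0.
by rewrite addnS /=; apply: (subset_trans IH); apply: subsetUl.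
Qed.

Lemma reach_path (T : finType) (S : {set {set T}}) x0 p :
  path (erel S) x0 p -> last x0 p \in reach S x0 (size p).
Proof.
elim/last_ind: p => [|p z IH]; first by rewrite /= set11.
rewrite rcons_path last_rcons size_rcons => /andP[pp rz] /=.
rewrite !inE; apply/orP; right; apply/exists_inP; exists (last x0 p) => //.
exact: IH.
Qed.

Lemma reach_count (T : finType) (S : {set {set T}}) x0 k :
  #|reach S x0 k| <= 1 + #|[set e in S | e \subset reach S x0 k]|.
Proof.
elim: k => [|k IH]; first by rewrite /= cards1.
set R := reach S x0 k; set R' := reach S x0 k.+1.
have RR' : R \subset R' by rewrite /R' /=; apply: subsetUl.
set Ek := [set e in S | e \subset R]; set Ek' := [set e in S | e \subset R'].
have EE : Ek \subset Ek'.
  apply/subsetP => e; rewrite !inE => /andP[-> /subset_trans]; exact.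
pose pz y := odflt x0 [pick z in R | erel S z y].
pose New := R' :\: R.
have cR' : #|R'| = #|R| + #|New|.
  rewrite /New cardsD (setIidPr RR'); have := subset_leq_card RR'; lia.
have pzP : forall y, y \in New -> pz y \in R /\ erel S (pz y) y.
  move=> y; rewrite /New /R' /= !inE => /andP[yR /orP[]]; first by rewrite (negbTE yR).
  move=> /exists_inP[z zR ezy]; rewrite /pz.
  case: pickP => [z' /andP[]|/(_ z)]; first by [].
  by rewrite zR ezy.
have inj : {in New &, injective (fun y => [set pz y; y])}.
  move=> y y' yN y'N E.
  have : y \in [set pz y'; y'] by rewrite -E set22.
  rewrite !inE => /orP[/eqP yz|/eqP //].
  have [zR _] := pzP y' y'N; move: yN; rewrite /New !inE yz zR; by [].
have sub : [set [set pz y; y] | y in New] \subset Ek' :\: Ek.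
  apply/subsetP => f /imsetP[y yN ->]; have [zR ezy] := pzP y yN.
  move: (yN); rewrite /New inE => /andP[yR yR'].
  have eS : [set pz y; y] \in S by exact: ezy.
  rewrite /Ek /Ek' !inE eS /=; apply/andP; split.
    apply/negP => /subsetP/(_ y); rewrite set22 => /(_ isT); by rewrite (negbTE yR).
  by apply/subsetP => w /set2P[]->; [apply: (subsetP RR') | ].
have := subset_leq_card sub; rewrite card_in_imset // => H.
have : #|Ek' :\: Ek| = #|Ek'| - #|Ek|.
  by rewrite cardsD (setIidPr EE).
have : #|Ek| <= #|Ek'| by apply: subset_leq_card.
have IH' : #|R| <= 1 + #|Ek| := IH.
rewrite cR' => le E; rewrite E in H.
apply: (leq_trans (leq_add IH' H)); by rewrite -addnA subnKC.
Qed.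

Lemma conn_count (T : finType) (S : {set {set T}}) (V : {set T}) :
  (forall x y, x \in V -> y \in V -> connect (erel S) x y) -> #|V| <= #|S| + 1.
Proof.
move=> H; case: (eqVneq V set0) => [->|/set0Pn[x0 x0V]]; first by rewrite cards0.
have sub : V \subset reach S x0 #|T|.
  apply/subsetP => y yV; have /connectP[p pth ->] := H x0 y x0V yV.
  case/shortenP: pth => p' pth' uq _.
  have sz : size p' < #|T|.
    have e1 : #|x0 :: p'| = size (x0 :: p') by apply/card_uniqP.
    by have := max_card (mem (x0 :: p')); rewrite e1.
  have -> : #|T| = size p' + (#|T| - size p') by rewrite subnKC // ltnW.
  apply: (subsetP (reach_mono S x0 (size p') (#|T| - size p'))).
  exact: reach_path pth'.
apply: (leq_trans (subset_leq_card sub)); apply: (leq_trans (reach_count S x0 _)).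
rewrite addnC leq_add2r; apply: subset_leq_card; apply/subsetP => e; rewrite inE.
by case/andP.
Qed.

Lemma two_cycles (T : finType) (G C1 C2 : {set {set T}}) (V : {set T}) e :
  pairs G -> V != set0 -> (forall x y, x \in V -> y \in V -> connect (erel G) x y) ->
  #|G| = #|V| -> C1 \subset G -> acycle C1 -> C2 \subset G -> acycle C2 ->
  e \in C1 -> e \notin C2 -> False.
Proof.
move=> pG nV cG GV C1G a1 C2G a2 e1 e2.
have eG : e \in G := subsetP C1G e e1.
have c1 := remove_conn pG C1G a1 e1 cG.
have C2G' : C2 \subset G :\ e.
  apply/subsetP => f fC; rewrite !inE (subsetP C2G _ fC) andbT.
  by apply/eqP => fe; move: e2; rewrite -fe fC.
have [n2 _ _] := a2; have [e' e'C] := set0Pn _ n2.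
have c2 := remove_conn (pairs_sub pG (subsetDl _ _)) C2G' a2 e'C c1.
have := conn_count c2.
have e'G : e' \in G :\ e := subsetP C2G' e' e'C.
have : #|G| = 1 + #|G :\ e| by rewrite (cardsD1 e G) eG.
have : #|G :\ e| = 1 + #|(G :\ e) :\ e'| by rewrite (cardsD1 e' (G :\ e)) e'G.
lia.
Qed.

Lemma graph_main (T : finType) (G : {set {set T}}) (V : {set T}) :
  pairs G -> cover G \subset V -> V != set0 ->
  (forall x y, x \in V -> y \in V -> connect (erel G) x y) ->
  [/\ #|V| <= #|G| + 1,
      #|G| + 1 = #|V| -> forall C : {set {set T}}, C \subset G -> ~ acycle C &
      #|G| = #|V| -> exists C : {set {set T}}, [/\ C \subset G, acycle C &
                 forall C' : {set {set T}}, C' \subset G -> acycle C' -> C' = C]].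
Proof.
move=> pG cV nV cG; split; first exact: conn_count cG.
  move=> E C CG aC; have [nC _ _] := aC; have [e eC] := set0Pn _ nC.
  have := conn_count (remove_conn pG CG aC eC cG).
  have eG : e \in G := subsetP CG e eC.
  have : #|G| = 1 + #|G :\ e| by rewrite (cardsD1 e G) eG.
  lia.
move=> E.
have [C [CG aC]] : exists C : {set {set T}}, C \subset G /\ acycle C.
  case: (boolP (leafy G)) => [lG|].
    have nG : G != set0.
      by rewrite -card_gt0 E card_gt0.
    have := acyc_count pG lG nG; have := subset_leq_card cV; lia.
  case/forallPn => S'; rewrite negb_imply => /andP[/andP[S'G nS'] /exists_inPn nl].
  have [C [CS aC]] : exists C : {set {set T}}, C \subset S' /\ acycle C.
    apply: (extract (pairs_sub pG S'G) nS') => v vc.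
    have := nl v vc; have := vc; rewrite in_cover; lia.
  by exists C; split => //; apply: subset_trans S'G.
exists C; split => // C' C'G aC'; apply/eqP; rewrite eqEsubset; apply/andP; split.
  apply/subsetP => e eC'; apply/negPn/negP => eC.
  exact: (two_cycles pG nV cG E C'G aC' CG aC eC' eC).
apply/subsetP => e eC; apply/negPn/negP => eC'.
exact: (two_cycles pG nV cG E CG aC C'G aC' eC eC').
Qed.

Lemma adj_sym N : symmetric (@adj N).
Proof.
move=> x y; rewrite /adj [x.1 == _]eq_sym [x.2 == _]eq_sym.
by case: (y.1 == x.1); case: (y.2 == x.2) => /=; lia.
Qed.

Lemma adj_irr N (x : cell N) : adj x x = false.
Proof. by rewrite /adj !eqxx /=; apply/negbTE; lia. Qed.

Lemma eq_cell N (y : cell N) (a b : 'I_N) :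
  (y == (a, b)) = ((y.1 : nat) == a) && ((y.2 : nat) == b).
Proof. by case: y => y1 y2; rewrite xpair_eqE. Qed.

Definition offb N (x : cell N) := ~~ on_border x.

Lemma offbP N (x : cell N) :
  offb x -> [/\ 0 < x.1, x.1.+1 < N, 0 < x.2 & x.2.+1 < N].
Proof.
rewrite /offb /on_border !negb_or => /andP[/andP[/andP[a b] c] d].
have := ltn_ord x.1; have := ltn_ord x.2.
move: a b c d; case: x => [[i ?] [j ?]] /= => *; split; lia.
Qed.

Definition nbL N (x : cell N) : cell N := (x.1, insubd x.2 x.2.-1).
Definition nbR N (x : cell N) : cell N := (x.1, insubd x.2 x.2.+1).
Definition nbU N (x : cell N) : cell N := (insubd x.1 x.1.-1, x.2).
Definition nbD N (x : cell N) : cell N := (insubd x.1 x.1.+1, x.2).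

Lemma nb_vals N (x : cell N) : offb x ->
  [/\ ((nbL x).1 : nat) = x.1 /\ ((nbL x).2 : nat) = x.2.-1,
      ((nbR x).1 : nat) = x.1 /\ ((nbR x).2 : nat) = x.2.+1,
      ((nbU x).1 : nat) = x.1.-1 /\ ((nbU x).2 : nat) = x.2 &
      ((nbD x).1 : nat) = x.1.+1 /\ ((nbD x).2 : nat) = x.2].
Proof.
case/offbP => a b c d; rewrite /nbL /nbR /nbU /nbD /= !val_insubd.
have -> : x.2.-1 < N by lia.
have -> : x.1.-1 < N by lia.
by rewrite b d.
Qed.

Lemma nat_adj (x1 x2 y1 y2 : nat) : 0 < x2 -> 0 < x1 ->
  (((x1 == y1) && ((x2.+1 == y2) || (y2.+1 == x2))) || ((x2 == y2) && ((x1.+1 == y1) || (y1.+1 == x1))) : nat)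
  = ((y1 == x1) && (y2 == x2.-1)) + ((y1 == x1) && (y2 == x2.+1)) + ((y1 == x1.-1) && (y2 == x2)) + ((y1 == x1.+1) && (y2 == x2)).
Proof. move=> *. lia. Qed.

Lemma sum_eq1 (T : finType) (a : T) : \sum_y (y == a : nat) = 1.
Proof. by rewrite (bigD1 a) //= eqxx big1 // => y /negbTE ->. Qed.

Lemma adj_split N (x y : cell N) : offb x ->
  (adj x y : nat) = (y == nbL x) + (y == nbR x) + (y == nbU x) + (y == nbD x).
Proof.
move=> ox; have [[l1 l2] [r1 r2] [u1 u2] [d1 d2]] := nb_vals ox.
have [a _ c _] := offbP ox.
move: l1 l2 r1 r2 u1 u2 d1 d2; rewrite /nbL /nbR /nbU /nbD /= => _ l2 _ r2 u1 _ d1 _.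
rewrite !eq_cell /= l2 r2 u1 d1 /adj.
exact: nat_adj.
Qed.

Lemma nb4 N (x : cell N) : offb x -> \sum_y (adj x y : nat) = 4.
Proof.
move=> ox; rewrite (eq_bigr _ (fun y _ => adj_split y ox)) !big_split /=.
by rewrite !sum_eq1.
Qed.

Definition perim N (S : {set cell N}) : nat :=
  #|[set p : cell N * cell N | [&& p.1 \in S, p.2 \notin S & adj p.1 p.2]]|.

Lemma side_bound N (S : {set cell N}) (key : cell N -> 'I_N) (F : cell N -> nat)
  (nb : cell N -> cell N) (cond : cell N -> cell N -> bool) :
  (forall x, x \in S -> [/\ adj x (nb x), cond x (nb x), key (nb x) = key x & F (nb x) < F x]) ->
  #|[set key x | x in S]| <=
  #|[set p : cell N * cell N | [&& p.1 \in S, p.2 \notin S, adj p.1 p.2 & cond p.1 p.2]]|.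
Proof.
move=> H.
set P := [set p : cell N * cell N | _].
apply: (leq_trans _ (leq_imset_card (fun p : cell N * cell N => key p.1) P)).
apply: subset_leq_card; apply/subsetP => k /imsetP[x0 x0S ->].
have P0 : (x0 \in S) && (key x0 == key x0) by rewrite x0S eqxx.
case: (@arg_minnP _ x0 (fun x => (x \in S) && (key x == key x0)) F P0) => x /andP[xS /eqP kx] xmin.
apply/imsetP; exists (x, nb x) => /=; last by rewrite kx.
have [a c kk f] := H x xS.
rewrite inE /= xS a c /= andbT.
apply/negP => nS; have := xmin (nb x); rewrite nS kk kx eqxx => /(_ isT).
by rewrite leqNgt f.
Qed.

Lemma card_sumb (T : finType) (P : pred T) : #|[set x | P x]| = \sum_x (P x : nat).
Proof.
rewrite -sum1_card big_mkcond /=; apply: eq_bigr => x _; rewrite inE; by case: (P x).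
Qed.

Lemma adj_nb N (x y : cell N) : offb x ->
  y \in [:: nbL x; nbR x; nbU x; nbD x] -> adj x y.
Proof.
move=> ox yin; have := adj_split y ox.
move: yin; rewrite !inE => /orP[/eqP->|/orP[/eqP->|/orP[/eqP->|/eqP->]]]; rewrite eqxx;
  case: (adj x _) => //=; lia.
Qed.

Lemma iso N (S : {set cell N}) : (forall x, x \in S -> offb x) ->
  exists a b, #|S| <= a * b /\ 2 * (a + b) <= perim S.
Proof.
move=> oS.
exists #|[set x.1 | x in S]|, #|[set x.2 | x in S]|; split.
  rewrite -cardsX; apply: subset_leq_card; apply/subsetP => x xS.
  by rewrite inE; apply/andP; split; apply/imsetP; exists x.
pose cL (p q : cell N) := ((q.1 : nat) == p.1) && (q.2.+1 == p.2 :> nat).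
pose cR (p q : cell N) := ((q.1 : nat) == p.1) && (p.2.+1 == q.2 :> nat).
pose cU (p q : cell N) := ((q.2 : nat) == p.2) && (q.1.+1 == p.1 :> nat).
pose cD (p q : cell N) := ((q.2 : nat) == p.2) && (p.1.+1 == q.1 :> nat).
pose PP (c : cell N -> cell N -> bool) :=
  #|[set p : cell N * cell N | [&& p.1 \in S, p.2 \notin S, adj p.1 p.2 & c p.1 p.2]]|.
have tot : PP cL + PP cR + PP cU + PP cD <= perim S.
  rewrite /PP /perim !card_sumb -!big_split /=; apply: leq_sum => p _.
  rewrite /cL /cR /cU /cD; case: (p.1 \in S); case: (p.2 \in S); case: (adj p.1 p.2) => //=; lia.
have bL : #|[set x.1 | x in S]| <= PP cL.
  apply: (side_bound (F := fun x => (x.2 : nat)) (nb := @nbL N)) => x xS.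
  have ox := oS x xS; have [[l1 l2] _ _ _] := nb_vals ox; have [_ _ c _] := offbP ox.
  split; first by apply: adj_nb; rewrite ?inE ?eqxx.
  - by rewrite /cL l1 l2 eqxx /=; lia.
  - by [].
  - by rewrite l2; lia.
have bR : #|[set x.1 | x in S]| <= PP cR.
  apply: (side_bound (F := fun x => N - x.2) (nb := @nbR N)) => x xS.
  have ox := oS x xS; have [_ [r1 r2] _ _] := nb_vals ox; have [_ _ c d] := offbP ox.
  split; first by apply: adj_nb; rewrite ?inE ?eqxx ?orbT.
  - by rewrite /cR r1 r2 eqxx /=.
  - by [].
  - by rewrite r2; lia.
have bU : #|[set x.2 | x in S]| <= PP cU.
  apply: (side_bound (F := fun x => (x.1 : nat)) (nb := @nbU N)) => x xS.
  have ox := oS x xS; have [_ _ [u1 u2] _] := nb_vals ox; have [a _ _ _] := offbP ox.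
  split; first by apply: adj_nb; rewrite ?inE ?eqxx ?orbT.
  - by rewrite /cU u1 u2 eqxx /=; lia.
  - by [].
  - by rewrite u1; lia.
have bD : #|[set x.2 | x in S]| <= PP cD.
  apply: (side_bound (F := fun x => N - x.1) (nb := @nbD N)) => x xS.
  have ox := oS x xS; have [_ _ _ [d1 d2]] := nb_vals ox; have [_ b _ _] := offbP ox.
  split; first by apply: adj_nb; rewrite ?inE ?eqxx ?orbT.
  - by rewrite /cD d1 d2 eqxx /=.
  - by [].
  - by rewrite d1; lia.
lia.
Qed.

Lemma eadj_sym N (A : {set cell N}) : symmetric (eadj A).
Proof. by move=> x y; rewrite /eadj adj_sym; case: (x \in A); case: (y \in A); rewrite ?andbF. Qed.

Lemma eadj_csym N (A : {set cell N}) x y : connect (eadj A) x y = connect (eadj A) y x.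
Proof. exact: (sym_connect_sym (@eadj_sym N A)). Qed.

Lemma border_outer N (A : {set cell N}) b : on_border b -> b \notin A -> outer A b.
Proof. by move=> ob bA; rewrite /outer bA /=; apply/existsP; exists b; rewrite ob connect0. Qed.

Lemma hole_offb N (A : {set cell N}) y : hole_cell A y -> offb y.
Proof.
rewrite /hole_cell /offb => /andP[yA no]; apply/negP => ob.
by move: no; rewrite border_outer.
Qed.

Lemma outer_notin N (A : {set cell N}) y : outer A y -> y \notin A.
Proof. by case/andP. Qed.

Lemma outer_conn N (A : {set cell N}) x y :
  x \notin A -> connect (eadj A) x y -> outer A y -> outer A x.
Proof.
move=> xA xy /andP[_ /existsP[b /andP[ob yb]]].
by rewrite /outer xA /=; apply/existsP; exists b; rewrite ob (connect_trans xy yb).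
Qed.

Lemma conn_notin N (A : {set cell N}) x y :
  x \notin A -> connect (eadj A) x y -> y \notin A.
Proof.
move=> xA xy; case: (eqVneq y x) => [->//|yx].
rewrite eadj_csym in xy; have [z] := first_step xy yx.
by case/and3P.
Qed.

Definition comp N (A : {set cell N}) x := [set y | connect (eadj A) x y].

Lemma comp_hole N (A : {set cell N}) x y :
  hole_cell A x -> y \in comp A x -> hole_cell A y.
Proof.
move=> /andP[xA nox]; rewrite inE => xy.
have yA := conn_notin xA xy.
rewrite /hole_cell yA /=; apply/negP => oy.
by move: nox; rewrite (outer_conn xA xy oy).
Qed.

Lemma comp_nbr N (A : {set cell N}) x y z :
  hole_cell A x -> y \in comp A x -> z \notin comp A x -> adj y z -> z \in A.
Proof.
move=> hx yc zc ayz; apply/negPn/negP => zA.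
have /andP[yA _] := comp_hole hx yc.
move: zc; rewrite !inE; move: yc; rewrite inE => xy.
by rewrite (connect_trans xy (connect1 (_ : eadj A y z))) // /eadj ayz yA zA.
Qed.

Lemma comp_eq N (A : {set cell N}) x y : y \in comp A x -> comp A y = comp A x.
Proof.
rewrite inE => xy; apply/setP => z; rewrite !inE; apply/idP/idP => H.
  exact: connect_trans xy H.
by rewrite eadj_csym in xy; apply: connect_trans xy H.
Qed.

Lemma holesP N (A : {set cell N}) H :
  reflect (exists2 x, hole_cell A x & H = comp A x) (H \in holes A).
Proof.
apply: (iffP imsetP) => [[x]|[x hx ->]]; first by rewrite inE => hx ->; exists x.
by exists x => //; rewrite inE.
Qed.

Lemma sum_holes N (A : {set cell N}) y :
  \sum_(H in holes A) (y \in H : nat) = hole_cell A y.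
Proof.
case: (boolP (hole_cell A y)) => hy.
  have yin : comp A y \in holes A by apply/holesP; exists y.
  rewrite (bigD1 (comp A y)) //= inE connect0 big1 // => H /andP[/holesP[x hx ->] ne].
  case: (boolP (y \in comp A x)) => // yc.
  by move: ne; rewrite (comp_eq yc) eqxx.
rewrite big1 // => H /holesP[x hx ->]; case: (boolP (y \in comp A x)) => // yc.
by move: hy; rewrite (comp_hole hx yc).
Qed.

Lemma trich N (A : {set cell N}) y :
  (y \in A : nat) + outer A y + hole_cell A y = 1.
Proof. by rewrite /hole_cell /outer; case: (y \in A); case: [exists b, _]. Qed.

Lemma card_pairs (T1 T2 : finType) (P : T1 -> T2 -> bool) :
  #|[set p : T1 * T2 | P p.1 p.2]| = \sum_x \sum_y (P x y : nat).
Proof. by rewrite (@card_sumb _ (fun p : T1 * T2 => P p.1 p.2)) (pair_big xpredT xpredT (fun x y => (P x y : nat))). Qed.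

Definition dsum N (P : cell N -> cell N -> bool) := \sum_x \sum_y (P x y : nat).

Lemma count4 N (A : {set cell N}) : (forall x, x \in A -> offb x) ->
  4 * #|A| = dsum (fun x y => (x \in A) && adj x y).
Proof.
move=> oA; rewrite /dsum -sum1_card big_distrr /= [RHS](bigID (fun x => x \in A)) /=.
rewrite [X in _ = _ + X]big1 ?addn0; last by move=> x /negbTE xA; rewrite big1 // => y; rewrite xA.
apply: eq_bigr => x xA; rewrite muln1 -(nb4 (oA x xA)); apply: eq_bigr => y _; by rewrite xA.
Qed.

Lemma split3 N (A : {set cell N}) :
  dsum (fun x y => (x \in A) && adj x y) =
  dsum (fun x y => [&& x \in A, y \in A & adj x y]) +
  dsum (fun x y => [&& x \in A, outer A y & adj x y]) +
  dsum (fun x y => [&& x \in A, hole_cell A y & adj x y]).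
Proof.
rewrite /dsum -!big_split /=; apply: eq_bigr => x _; rewrite -!big_split /=.
apply: eq_bigr => y _; have := trich A y.
by case: (x \in A); case: (adj x y); case: (y \in A); case: (outer A y); case: (hole_cell A y).
Qed.

Definition DG N (A : {set cell N}) : {set {set cell N}} := [set e | dual_edge A e].

Lemma DG_pairs N (A : {set cell N}) : pairs (DG A).
Proof. by move=> e; rewrite inE => /andP[/andP[/eqP]]. Qed.

Lemma DG_sub N (A : {set cell N}) e : e \in DG A -> e \subset A.
Proof. by rewrite inE => /andP[/andP[_]]. Qed.

Lemma DG_cover N (A : {set cell N}) : cover (DG A) \subset A.
Proof.
apply/subsetP => v /bigcupP[e eG ve]; exact: (subsetP (DG_sub eG)).
Qed.

Lemma DG_pair N (A : {set cell N}) x y :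
  ([set x; y] \in DG A) = [&& adj x y, x \in A & y \in A].
Proof.
rewrite inE /dual_edge; case: (eqVneq x y) => [->|xy].
  by rewrite adj_irr setUid cards1.
rewrite cards2 xy /= subUset !sub1set.
case xA: (x \in A); case yA: (y \in A); rewrite /= ?andbF ?andbT //.
apply/forall_inP/idP => [H|axy a].
  have /forall_inP H2 := H x (set21 _ _).
  by have /implyP := H2 y (set22 _ _); apply.
have ayx : adj y x by rewrite adj_sym.
rewrite !inE => /orP[]/eqP-> ; apply/forall_inP => b; rewrite !inE => /orP[]/eqP->;
  by rewrite ?eqxx ?axy ?ayx ?implybT.
Qed.

Lemma erel_DG N (A : {set cell N}) : erel (DG A) =2 dadj A.
Proof. by move=> x y; rewrite /erel DG_pair. Qed.

Lemma deg_DG N (A : {set cell N}) x : x \in A ->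
  deg (DG A) x = #|[set y | (y \in A) && adj x y]|.
Proof.
move=> xA; rewrite /deg.
have -> : [set e in DG A | x \in e] = [set [set x; y] | y in [set y | (y \in A) && adj x y]].
  apply/setP => e; rewrite inE; apply/andP/imsetP => [[eG xe]|[y]].
    have [a [b [ab De]]] := pair_form (DG_pairs eG).
    have : exists y, e = [set x; y].
      move: xe; rewrite De !inE => /orP[]/eqP->; first by exists b.
      by exists a; rewrite setUC.
    case=> y Dy; exists y => //; move: eG; rewrite Dy DG_pair inE.
    by case/and3P => a1 _ b1; rewrite a1 b1.
  rewrite inE => /andP[yA axy] ->; split; last by rewrite set21.
  by rewrite DG_pair axy xA yA.
rewrite card_in_imset // => y y'; rewrite !inE => /andP[_ a1] /andP[_ a2] E.
have : y \in [set x; y'] by rewrite -E set22.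
rewrite !inE => /orP[/eqP yx|/eqP //]; by move: a1; rewrite yx adj_irr.
Qed.

Lemma count_int N (A : {set cell N}) :
  dsum (fun x y => [&& x \in A, y \in A & adj x y]) = 2 * #|DG A|.
Proof.
rewrite /dsum (bigID (fun x => x \in A)) /= [X in _ + X]big1 ?addn0; last first.
  by move=> x /negbTE xA; rewrite big1 // => y; rewrite xA.
transitivity (\sum_(x in A) deg (DG A) x).
  apply: eq_bigr => x xA; rewrite deg_DG // card_sumb; apply: eq_bigr => y _.
  by rewrite xA.
rewrite hs_gen (eq_bigr (fun _ => 2)); first by rewrite sum_nat_const mulnC.
move=> e eG; have -> : e :&: A = e by apply/setIidPl; exact: DG_sub eG.
exact: (DG_pairs eG).
Qed.

Definition pr N (A : {set cell N}) (H : {set cell N}) :=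
  dsum (fun x y => [&& x \in A, y \in H & adj x y]).

Lemma count_holes N (A : {set cell N}) :
  dsum (fun x y => [&& x \in A, hole_cell A y & adj x y]) = \sum_(H in holes A) pr A H.
Proof.
rewrite /pr /dsum [RHS]exchange_big /=; apply: eq_bigr => x _.
rewrite [RHS]exchange_big /=; apply: eq_bigr => y _.
transitivity (\sum_(H in holes A) (((x \in A) && adj x y) * (y \in H) : nat)).
  rewrite -big_distrr /= sum_holes.
  by case: (x \in A); case: (hole_cell A y); case: (adj x y).
by apply: eq_bigr => H _; case: (x \in A); case: (y \in H); case: (adj x y).
Qed.

Lemma hole_notin N (A : {set cell N}) H y : H \in holes A -> y \in H -> y \notin A.
Proof. by case/holesP => x hx -> /(comp_hole hx)/andP[]. Qed.

Lemma hole_offb' N (A : {set cell N}) H y : H \in holes A -> y \in H -> offb y.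
Proof. by case/holesP => x hx -> /(comp_hole hx)/hole_offb. Qed.

Lemma pr_perim N (A : {set cell N}) H : H \in holes A -> pr A H = perim H.
Proof.
move=> Hh; rewrite /perim (card_pairs (fun a b => [&& a \in H, b \notin H & adj a b])).
rewrite /pr /dsum exchange_big /=; apply: eq_bigr => y _; apply: eq_bigr => x _.
case yH: (y \in H); rewrite ?andbF //= adj_sym.
case axy: (adj y x); rewrite ?andbF ?andbT //=.
suff -> : (x \in A) = (x \notin H) by [].
apply/idP/idP => [xA|xH].
  by apply/negP => xH; move: xA; rewrite (negbTE (hole_notin Hh xH)).
move: Hh => /holesP[x0 hx0 DH]; rewrite DH in yH xH.
exact: (comp_nbr hx0 yH xH axy).
Qed.

Lemma single_hole N (A : {set cell N}) H : H \in holes A -> #|H| = 1 -> pr A H = 4.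
Proof.
move=> Hh /eqP/cards1P[y DH]; rewrite pr_perim // /perim.
rewrite (card_pairs (fun a b => [&& a \in H, b \notin H & adj a b])).
have oy : offb y by apply: (hole_offb' Hh); rewrite DH set11.
rewrite (bigD1 y) //= [X in _ + X]big1 ?addn0; last first.
  by move=> a ay; rewrite big1 // => b; rewrite DH inE (negbTE ay).
rewrite -(nb4 oy); apply: eq_bigr => b _; rewrite DH !inE eqxx /=.
by case: (eqVneq b y) => [->|]; rewrite ?adj_irr.
Qed.

Definition HC N (A : {set cell N}) := [set c | hole_cell A c].

Lemma pout_perim N (A : {set cell N}) : p_out A = perim (A :|: HC A).
Proof.
rewrite /p_out /perim /HC; apply: eq_card => p; rewrite !inE.
have t := trich A p.2.
case hp1: (hole_cell A p.1).
  have p1A : p.1 \notin A by case/andP: hp1.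
  rewrite (negbTE p1A) /=.
  case op2: (outer A p.2); last first.
    by move: t; rewrite op2; case: (p.2 \in A); case: (hole_cell A p.2).
  case apq: (adj p.1 p.2); rewrite ?andbF //=.
  exfalso; move: hp1; rewrite /hole_cell p1A /=.
  rewrite (outer_conn p1A (connect1 (_ : eadj A p.1 p.2))) //.
  by rewrite /eadj apq p1A outer_notin.
rewrite orbF; case: (p.1 \in A) => //=; congr (_ && _).
by move: t; case: (p.2 \in A); case: (outer A p.2); case: (hole_cell A p.2).
Qed.

Lemma cardF N (A : {set cell N}) : #|A| + #|holes A| <= #|A :|: HC A|.
Proof.
rewrite cardsU.
have -> : A :&: HC A = set0.
  apply/setP => c; rewrite !inE; apply/negP => /andP[cA /andP[/negP]]; by [].
rewrite cards0 subn0 leq_add2l; exact: leq_imset_card.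
Qed.

Lemma ab_bound (a b m p : nat) : m <= a * b -> 2 * (a + b) <= p ->
  [/\ 0 < m -> 4 <= p, p <= 5 -> m <= 1, p <= 6 -> m <= 2 & 1 < m -> 6 <= p].
Proof.
move=> H1 H2; split => H3.
- have : 0 < a * b by lia.
  rewrite muln_gt0 => /andP[]; lia.
- have : a + b <= 2 by lia.
  case: a H1 H2 => [|[|[|a]]]; case: b => [|[|[|b]]]; lia.
- have : a + b <= 3 by lia.
  case: a H1 H2 => [|[|[|[|a]]]]; case: b => [|[|[|[|b]]]]; lia.
- suff : 3 <= a + b by lia.
  case: a H1 H2 => [|[|a]]; case: b => [|[|b]]; lia.
Qed.

Lemma hole_facts N (A : {set cell N}) H : H \in holes A ->
  [/\ 4 <= pr A H, pr A H <= 5 -> #|H| = 1, pr A H <= 6 -> #|H| <= 2,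
      1 < #|H| -> 6 <= pr A H & 0 < #|H|].
Proof.
move=> Hh; have [a [b [s p]]] := iso (fun y => hole_offb' Hh (y := y)).
rewrite -(pr_perim Hh) in p.
have [h1 h2 h3 h4] := ab_bound s p.
have ne : 0 < #|H| by move: Hh => /holesP[x hx ->]; apply/card_gt0P; exists x; rewrite inE connect0.
split => // [|/h2]; first by apply: h1.
lia.
Qed.

Lemma sum_ind (I : finType) (X : {set I}) (i0 : I) (c : nat) :
  i0 \in X -> \sum_(i in X) (c * (i == i0)) = c.
Proof.
by move=> iX; rewrite (bigD1 i0) //= eqxx muln1 big1 ?addn0 // => i /andP[_ /negbTE ->]; rewrite muln0.
Qed.

Lemma sum_lb1 (I : finType) (X : {set I}) (f : I -> nat) i0 :
  i0 \in X -> (forall i, i \in X -> 4 <= f i) ->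
  4 * #|X| + (f i0 - 4) <= \sum_(i in X) f i.
Proof.
move=> i0X H.
have : \sum_(i in X) (4 + (f i0 - 4) * (i == i0)) <= \sum_(i in X) f i.
  apply: leq_sum => i iX; case: (eqVneq i i0) => [->|]; rewrite ?muln1 ?muln0 ?addn0.
    by have := H i0 i0X; lia.
  by move=> _; apply: H.
by rewrite big_split /= sum_ind // sum_nat_const mulnC.
Qed.

Lemma sum_lb2 (I : finType) (X : {set I}) (f : I -> nat) i0 i1 :
  i0 \in X -> i1 \in X -> i0 != i1 -> (forall i, i \in X -> 4 <= f i) ->
  4 * #|X| + (f i0 - 4) + (f i1 - 4) <= \sum_(i in X) f i.
Proof.
move=> i0X i1X ne H.
have : \sum_(i in X) (4 + (f i0 - 4) * (i == i0) + (f i1 - 4) * (i == i1)) <= \sum_(i in X) f i.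
  apply: leq_sum => i iX; case: (eqVneq i i0) => [->|n0]; rewrite ?muln1 ?muln0 ?addn0.
    by rewrite (negbTE ne) muln0 addn0; have := H i0 i0X; lia.
  case: (eqVneq i i1) => [->|n1]; rewrite ?muln1 ?muln0 ?addn0.
    by have := H i1 i1X; lia.
  exact: H.
by rewrite !big_split /= !sum_ind // sum_nat_const mulnC.
Qed.

Lemma is_cycleE N (A : {set cell N}) C : is_cycle A C <-> C \subset DG A /\ acycle C.
Proof.
split => [[a b c d]|[sub [a c d]]]; split => //.
- by apply/subsetP => e /b; rewrite inE.
- by move=> e /(subsetP sub); rewrite inE.
Qed.

Lemma slack N (A : {set cell N}) :
  let S := \sum_(H in holes A) pr A H in
  4 * #|holes A| + 1 <= S -> S <= 4 * #|holes A| + 2 ->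
  S = 4 * #|holes A| + 2 /\
  exists2 H0, H0 \in holes A &
     (#|H0| = 2%N /\ forall H, H \in holes A -> H != H0 -> #|H| = 1%N).
Proof.
move=> S lo hi.
have f4 : forall H, H \in holes A -> 4 <= pr A H by move=> H /hole_facts[].
have [H0 H0h p5] : exists2 H0, H0 \in holes A & 4 < pr A H0.
  case: (boolP [exists H in holes A, 4 < pr A H]) => [/exists_inP[H ? ?]|/exists_inPn nx].
    by exists H.
  have : S <= \sum_(H in holes A) 4.
    by apply: leq_sum => H Hh; have := nx H Hh; rewrite ltnNge negbK.
  rewrite sum_nat_const; lia.
have b0 := sum_lb1 H0h f4.
have [_ g5 g6 g7 g0] := hole_facts H0h.
have s0 : #|H0| = 2.
  have : #|H0| <= 2 by apply: g6; rewrite -/S in b0; lia.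
  have : #|H0| != 1 by apply/eqP => e1; move: p5; rewrite single_hole.
  lia.
have p6 := g7 (ltac:(rewrite s0) : 1 < #|H0|).
split; first by rewrite -/S in b0; lia.
exists H0 => //; split => // H Hh ne.
have b2 := sum_lb2 Hh H0h ne f4.
have [_ h5 _ _ _] := hole_facts Hh.
apply: h5; rewrite -/S in b2; lia.
Qed.

Lemma p2_sum N (A : {set cell N}) :
  (exists2 H0, H0 \in holes A &
     (#|H0| = 2%N /\ forall H, H \in holes A -> H != H0 -> #|H| = 1%N)) ->
  4 * #|holes A| + 2 <= \sum_(H in holes A) pr A H.
Proof.
case=> H0 H0h [s0 _].
have f4 : forall H, H \in holes A -> 4 <= pr A H by move=> H /hole_facts[].
have := sum_lb1 H0h f4.
have [_ _ _ g7 _] := hole_facts H0h.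
have := g7 (ltac:(rewrite s0) : 1 < #|H0|).
lia.
Qed.

Import Order.TTheory GRing.Theory Num.Theory.
Local Open Scope ring_scope.

Lemma ceil_bound (R : realType) (n h k : nat) :
  (4 * (n + h) <= k * k)%N -> ceil2sqrt R n h <= k%:Z.
Proof.
move=> H; rewrite /ceil2sqrt ceil_le_int.
have s0 : 0 <= Num.sqrt ((n + h)%:R : R) by apply: sqrtr_ge0.
have -> : (k%:Z)%:~R = (k%:R : R) by [].
rewrite -(@ler_pXn2r _ 2) //; last first.
- by rewrite nnegrE.
- by rewrite nnegrE; apply: mulr_ge0.
rewrite exprMn sqr_sqrtr //.
have -> : (2 ^+ 2 * (n + h)%:R : R) = (4 * (n + h))%N%:R by rewrite natrM; congr (_ * _); rewrite expr2 -natrM.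
by rewrite -natrX ler_nat expnS expn1.
Qed.

Lemma ceil_ge0' (R : realType) (n h : nat) : 0 <= ceil2sqrt R n h.
Proof.
rewrite /ceil2sqrt ceil_ge0.
have := @sqrtr_ge0 R ((n + h)%:R); lra.
Qed.

Lemma hyp_conv (R : realType) (n h : nat) :
  Mnh R n h = h%:R + 1 / 2 ->
  exists c : nat, ceil2sqrt R n h = c%:Z /\ n = (c + 2 * h)%N.
Proof.
have := ceil_ge0' R n h; rewrite /Mnh.
case: (ceil2sqrt R n h) => [c|c] // _ E; exists c; split => //.
have E2 : (n%:R : R) = c%:R + 2 * h%:R.
  have e1 : ((Posz c)%:~R : R) = c%:R by [].
  rewrite e1 in E; move: E; set x := (n%:R : R); set y := (c%:R : R); set z := (h%:R : R).
  move=> E.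
  have : 2 * x + 2 - 2 * y = 4 * (z + 1/2).
    by rewrite -E; field.
  lra.
apply/eqP; rewrite -(eqr_nat R) E2 natrD natrM; done.
Qed.

Unset Implicit Arguments.

Theorem corollary1 (R : realType) (N : nat) (A : {set cell N}) :
  polyomino A ->
  Mnh R (ntiles A) (nholes A) = (nholes A)%:R + 1 / 2 ->
  let P1 := single_cycle A in
  let P2 := exists2 H0, H0 \in holes A &
              (#|H0| = 2%N /\ forall H, H \in holes A -> H != H0 -> #|H| = 1%N) in
  let P3 := ((p_out A)%:R : R) = 2 * (ceil2sqrt R (ntiles A) (nholes A))%:~R + 2 in
  [\/ [/\ P1, ~ P2 & ~ P3], [/\ ~ P1, P2 & ~ P3] | [/\ ~ P1, ~ P2 & P3]].
Proof.
move=> [nA offA connA] hyp P1 P2 P3.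
have [c [ceq nE]] := @hyp_conv R _ _ hyp.
have P3E : P3 <-> p_out A = (2 * c + 2)%N.
  rewrite /P3 ceq; have -> : 2 * ((c%:Z)%:~R : R) + 2 = ((2 * c + 2)%N%:R : R).
    by rewrite natrD natrM.
  by split => [/eqP|->//]; rewrite eqr_nat => /eqP.
move: nE; rewrite /ntiles /nholes => nE.
have oA : forall x, x \in A -> offb x by [].
set S := (\sum_(H in holes A) pr A H)%N.
have count : (4 * #|A| = 2 * #|DG A| + p_out A + S)%N.
  rewrite (count4 oA) split3 count_int count_holes /p_out.
  by rewrite (card_pairs (fun a b => [&& a \in A, outer A b & adj a b])).
have Hpo : (2 * c <= p_out A)%N.
  have oF : forall x, x \in A :|: HC A -> offb x.
    by move=> x; rewrite !inE => /orP[/oA //|/hole_offb].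
  have [a [b [s p]]] := iso oF.
  rewrite -pout_perim in p.
  have cF := cardF A.
  have ab4 : (4 * (a * b) <= (a + b) * (a + b))%N.
    case: (leqP a b) => h.
      have [d ->] : exists d, b = (a + d)%N by exists (b - a)%N; lia.
      nia.
    have [d ->] : exists d, a = (b + d)%N by exists (a - b)%N; lia.
    nia.
  have : (4 * (#|A| + #|holes A|) <= (a + b) * (a + b))%N.
    apply: leq_trans ab4; rewrite leq_mul2l /=; exact: leq_trans cF s.
  move/(ceil_bound R) => cb.
  have : (c <= a + b)%N by rewrite -lez_nat -ceq.
  lia.
have Hs : (4 * #|holes A| <= S)%N.
  have : (\sum_(H in holes A) 4 <= S)%N.
    by apply: leq_sum => H /hole_facts[].
  by rewrite sum_nat_const mulnC.
have conn : forall x y, x \in A -> y \in A -> connect (erel (DG A)) x y.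
  by move=> x y xA yA; rewrite (eq_connect (erel_DG A)); apply: connA.
have [gA gB gC] := graph_main (@DG_pairs N A) (@DG_cover N A) nA conn.
have p2s := @p2_sum N A.
have sl := @slack N A.
have nP1 : (#|DG A| + 1 = #|A|)%N -> ~ P1.
  move=> E [C [/is_cycleE[CG aC] _]]; exact: gB E C CG aC.
have n0 : (0 < #|A|)%N by rewrite card_gt0.
case: (ltngtP #|DG A| #|A|) => [lt|gt|eq]; last first.
-
  apply: Or31; split.
  + have [C [CG aC uC]] := gC eq.
    exists C; split; first exact/is_cycleE.
    by move=> C' /is_cycleE[C'G aC']; apply: uC.
  + by move/p2s; lia.
  + by move/P3E; lia.
- lia.
- have E : (#|DG A| + 1 = #|A|)%N by lia.
  case: (leqP (4 * #|holes A| + 1) S) => lo.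
  + have [_ p2] := sl lo ltac:(lia).
    apply: Or32; split => //; first exact: nP1.
    by move/P3E; have [] := sl lo ltac:(lia); lia.
  + apply: Or33; split; first exact: nP1.
    * by move/p2s; lia.
    * by apply/P3E; lia.
Qed.
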